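(* In the setting described in the context, assume $L_\varepsilon\to\infty$ as $\varepsilon\to0$. Define for $X>0$ $$Q_\varepsilon(X):=\int_0^1\frac{h_\varepsilon(y)}{L_\varepsilon}K_\varepsilon(y,L_\varepsilon X)\,dy.$$ Then there exist a subsequence of $\varepsilon\to0$ and a continuous function $Q\colon(0,\infty)\to\mathbb{R}$ such that $Q_\varepsilon\to Q$ locally uniformly on $(0,\infty)$ along this subsequence.
   Context: Fix $a>0$, $b<1$, $\gamma=b-a$. $K\colon(0,\infty)^2\to[0,\infty)$ is $C^1$, symmetric, homogeneous of degree $\gamma$ ($K(\lambda x,\lambda y)=\lambda^\gamma K(x,y)$), satisfies $C_1(x^{-a}y^b+x^by^{-a})\le K(x,y)\le C_2(x^{-a}y^b+x^by^{-a})$ with $C_1,C_2>0$, and for every $[d,D]\subset(0,\infty)$ there is $C_3(d,D)$ with $|\partial_xK(x,y)|\le C_3(y^{-a}+y^b)$ for $x\in[d,D]$, $y>0$. Fix $\rho\in(\max\{b,0\},1)$. For $\varepsilon>0$ let $K_\varepsilon(y,z)=K(y+\varepsilon,z+\varepsilon)$ and $I_\varepsilon[g](x)=\int_0^x\int_{x-y}^\infty\frac{K_\varepsilon(y,z)}{z}g(y)g(z)\,dz\,dy$. Let $\varepsilon$ range over a sequence of positive numbers tending to $0$, and for each such $\varepsilon$ let $h_\varepsilon\colon(0,\infty)\to[0,\infty)$ be continuous with $\int_0^rh_\varepsilon\,dx\le r^{1-\rho}$ for all $r>0$, $\lim_{r\to\infty}r^{\rho-1}\int_0^rh_\varepsilon\,dx=1$,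 and $\int_0^\infty\varphi'I_\varepsilon[h_\varepsilon]\,dx=\int_0^\infty\varphi'(x)xh_\varepsilon(x)\,dx+(1-\rho)\int_0^\infty\varphi h_\varepsilon\,dx$ for all $\varphi\in C_c^\infty([0,\infty))$. Set $\mu_\varepsilon=\int_0^1h_\varepsilon(x)(x+\varepsilon)^{-a}dx$, $\lambda_\varepsilon=\int_0^1h_\varepsilon(x)(x+\varepsilon)^bdx$, $L_\varepsilon=\max(\lambda_\varepsilon^{1/(1+a)},\mu_\varepsilon^{1/(1-b)})$. *)

(* Defs.v *)
From HB Require Import structures.
From mathcomp Require Import all_boot all_order all_algebra.
From mathcomp Require Import all_classical all_reals all_analysis.
Set Implicit Arguments. Unset Strict Implicit. Unset Printing Implicit Defensive.
Import Order.TTheory GRing.Theory Num.Theory.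
Import numFieldNormedType.Exports.
Local Open Scope classical_set_scope.
Local Open Scope ring_scope.

Section Defs.
Variable R : realType.
Local Notation mu := (@lebesgue_measure R).

Definition oitv (l r : R) : set R := [set x | l < x < r].
Definition oray (l : R) : set R := [set x | l < x].

Definition C1_quadrant (K : R -> R -> R) : Prop :=
  forall x y : R, 0 < x -> 0 < y ->
    [/\ derivable (fun t => K t y) x 1,
        derivable (fun t => K x t) y 1,
        {for (x, y), continuous (fun p : R * R => K p.1 p.2)},
        {for (x, y), continuous (fun p : R * R => derive1 (fun t => K t p.2) p.1)}
      & {for (x, y), continuous (fun p : R * R => derive1 (fun t => K p.1 t) p.2)}].

Definition dxK (K : R -> R -> R) (x y : R) : R := derive1 (fun t => K t y) x.

Definition Keps (K : R -> R -> R) (eps y z : R) : R := K (y + eps) (z + eps).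

(* I_eps[g](x) = int_0^x int_{x-y}^oo K_eps(y,z)/z g(y) g(z) dz dy
   (extended-real valued: the integrand is nonnegative). *)
Definition Ieps (K : R -> R -> R) (ep : R) (g : R -> R) (x : R) : \bar R :=
  (\int[mu]_(y in oitv 0 x) (\int[mu]_(z in oray (x - y)) (Keps K ep y z / z * g y * g z)%:E))%E.

(* phi in C_c^oo([0,oo)): smooth function whose support meets [0,oo)
   in a bounded set (restriction to [0,oo) of a smooth function). *)
Definition test_fun (phi : R -> R) : Prop :=
  (forall (n : nat) (x : R), derivable (derive1n n phi) x 1) /\
  (exists M : R, forall x, M < x -> phi x = 0).

Definition mu_eps (h : R -> R) (a eps : R) : R :=
  Rintegral mu (oitv 0 1) (fun x => h x * (x + eps) `^ (- a)).

Definition lambda_eps (h : R -> R) (b eps : R) : R :=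
  Rintegral mu (oitv 0 1) (fun x => h x * (x + eps) `^ b).

Definition L_eps (h : R -> R) (a b eps : R) : R :=
  Num.max ((lambda_eps h b eps) `^ (1 / (1 + a)))
          ((mu_eps h a eps) `^ (1 / (1 - b))).

Definition Q_eps (K : R -> R -> R) (h : R -> R) (a b eps X : R) : R :=
  Rintegral mu (oitv 0 1)
    (fun y => h y / L_eps h a b eps * Keps K eps y (L_eps h a b eps * X)).

End Defs.

(* Main.v *)
From HB Require Import structures.
From mathcomp Require Import all_boot all_order all_algebra.
From mathcomp Require Import all_classical all_reals all_analysis.
From mathcomp Require Import ring lra measurable_realfun.
Require Import Defs.
Import Order.TTheory GRing.Theory Num.Theory.
Import numFieldNormedType.Exports.
Local Open Scope classical_set_scope.
Local Open Scope ring_scope.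


Definition sinc (s : nat -> nat) := forall n, (s n < s n.+1)%N.
Lemma sinc_mono s : sinc s -> forall m n, (m < n)%N -> (s m < s n)%N.
Proof. move=> hs; exact: (homo_ltn ltn_trans hs). Qed.
Lemma sinc_ge s : sinc s -> forall n, (n <= s n)%N.
Proof. move=> hs; elim=> // n IH; exact: (leq_ltn_trans IH (hs n)). Qed.

Fixpoint diag (E : (nat -> nat) * nat -> nat -> nat) (k : nat) : nat -> nat :=
  match k with 0 => E (id, 0%N) | k'.+1 => diag E k' \o E (diag E k', k'.+1) end.

Lemma diag_sinc E : (forall t, sinc (E t)) -> forall k, sinc (diag E k).
Proof.
move=> HE; elim=> [|k IH] /=; first exact: HE.
move=> n /=; apply: sinc_mono => //; exact: HE.
Qed.

Lemma diag_tail E : (forall t, sinc (E t)) -> forall k d x,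
  exists m, (x <= m)%N /\ diag E (k + d) x = diag E k m.
Proof.
move=> HE k; elim=> [|d IH] x; first by exists x; rewrite addn0.
rewrite addnS /=. have [m [h1 h2]] := IH (E (diag E (k + d), (k + d).+1) x).
exists m; split => //. apply: (leq_trans _ h1). apply: sinc_ge. exact: HE.
Qed.

Lemma diag_diag_sinc E : (forall t, sinc (E t)) -> sinc (fun n => diag E n n).
Proof.
move=> HE n /=. apply: sinc_mono; first exact: diag_sinc.
apply: (leq_trans (ltnSn n)); apply: sinc_ge; exact: HE.
Qed.

Lemma fin_common (P : nat -> nat -> nat -> Prop) I :
  (forall i, (i < I)%N -> exists N, forall n n', (N <= n)%N -> (N <= n')%N -> P i n n') ->
  exists N, forall i, (i < I)%N -> forall n n', (N <= n)%N -> (N <= n')%N -> P i n n'.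
Proof.
elim: I => [|I IH] H; first by exists 0%N.
have [N1 H1] := IH (fun i hi => H i (ltnW hi)).
have [N2 H2] := H I (ltnSn I).
exists (maxn N1 N2) => i; rewrite ltnS leq_eqVlt => /orP[/eqP->|hi] n n' hn hn'.
- apply: H2; [exact: leq_trans (leq_maxr _ _) hn | exact: leq_trans (leq_maxr _ _) hn'].
- apply: H1 => //; [exact: leq_trans (leq_maxl _ _) hn | exact: leq_trans (leq_maxl _ _) hn'].
Qed.

Section S.
Variable R : realType.
Lemma ev_nat (u : nat -> R) l : u n @[n --> \oo] --> l ->
  forall e, 0 < e -> exists N, forall n, (N <= n)%N -> `|l - u n| < e.
Proof.
move=> /cvgrPdist_lt ul e e0; have := ul e e0.
case => N _ HN. exists N => n Nn; exact: HN.
Qed.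
Lemma bw (u : nat -> R) B : (forall n, `|u n| <= B) ->
  exists psi : nat -> nat, (forall n, (psi n < psi n.+1)%N) /\
   exists l, forall e, 0 < e -> exists N, forall n, (N <= n)%N -> `|l - u (psi n)| < e.
Proof.
move=> uB.
have : bounded_fun u.
  exists B; split; first exact: num_real.
  move=> M BM x _; exact: (le_trans (uB x) (ltW BM)).
case/bolzano_weierstrass => psi ipsi cv.
exists psi; split; first by move: ipsi => /increasing_seqP.
exists (lim (u \o psi @ \oo)). apply: ev_nat. exact: cv.
Qed.
Lemma cauchy_lim (u : nat -> R) :
  (forall e, 0 < e -> exists N, forall n m, (N <= n)%N -> (N <= m)%N -> `|u n - u m| < e) ->
  exists l, forall e, 0 < e -> exists N, forall n, (N <= n)%N -> `|l - u n| < e.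
Proof.
move=> Hc.
have : cvgn u.
  apply/cauchy_cvgP; apply: cauchy_exP => e e0.
  have [N HN] := Hc e e0. exists (u N). exists N => // n Nn /=.
  rewrite -ball_normE /=. exact: HN.
move=> cv. exists (lim (u @ \oo)). exact: ev_nat.
Qed.
Definition grid (k : nat) : R :=
  if (unpickle k : option (nat * nat)) is Some (i, m) then i.+1%:R / m.+1%:R else 1.
Lemma grid_pickle i m : grid (pickle (i, m)) = i.+1%:R / m.+1%:R.
Proof. by rewrite /grid pickleK. Qed.
Lemma grid_gt0 k : 0 < grid k.
Proof. rewrite /grid; case: (unpickle k) => [[i m]|] //; by rewrite divr_gt0 // ltr0n. Qed.
End S.


Section AA.
Variable R : realType.

Lemma tri3 (a b c d : R) : `|a - d| <= `|a - b| + `|b - c| + `|c - d|.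
Proof.
apply: (le_trans (ler_distD c a d)); rewrite lerD2r; exact: ler_distD.
Qed.

Lemma grid_approx (c d eta : R) : 0 < c -> 0 < eta ->
  exists m I : nat, forall x, c <= x -> x <= d -> exists i, (i < I)%N /\
    c - eta <= grid R (pickle (i, m)) /\ grid R (pickle (i, m)) <= d /\
    `|x - grid R (pickle (i, m))| < eta.
Proof.
move=> c0 e0.
set m := Num.truncn (eta^-1 + c^-1).
have hm : eta^-1 + c^-1 < m.+1%:R by exact: truncnS_gt.
set w : R := m.+1%:R.
have w0 : 0 < w by rewrite ltr0n.
have hwe : w^-1 < eta.
  rewrite -(ltf_pV2 (F:=R)) ?posrE ?invr_gt0 // invrK.
  have : 0 < c^-1 by rewrite invr_gt0. lra.
have hwc : 1 < c * w.
  have h1 : c^-1 < w.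
    have : 0 < eta^-1 by rewrite invr_gt0.
    lra.
  by rewrite -(ltr_pM2l c0) mulfV ?gt_eqF // in h1.
exists m, (Num.truncn (d * w)).+1 => x cx xd.
set t := Num.truncn (x * w).
have x0 : 0 <= x * w by rewrite mulr_ge0 // ltW // (lt_le_trans c0 cx).
have ht1 : t%:R <= x * w by rewrite truncn_le.
have ht2 : x * w < t.+1%:R by exact: truncnS_gt.
have t1 : (0 < t)%N.
  rewrite truncn_gt0; apply: ltW; apply: (lt_le_trans hwc).
  by rewrite ler_pM2r.
exists t.-1.
have -> : grid R (pickle (t.-1, m)) = x - (x * w - t%:R) / w.
  rewrite grid_pickle (prednK t1) -/w. field. by rewrite gt_eqF.
have hxw : x * w <= d * w by rewrite ler_pM2r // .
have hq0 : 0 <= (x * w - t%:R) / w by rewrite divr_ge0 ?subr_ge0 // ltW.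
have hq1 : (x * w - t%:R) / w < w^-1.
  rewrite ltr_pdivrMr // mulVf ?gt_eqF //. rewrite -addn1 natrD in ht2. lra.
clearbody t w m.
split; last split; last split.
- rewrite ltnS; apply: (leq_trans (leq_pred t)).
  have dw0 : 0 <= d * w by lra.
  rewrite truncn_ge_nat //. lra.
- lra.
- lra.
- rewrite ltr_norml; apply/andP; split; lra.
Qed.

End AA.


Lemma leqT {m n p : nat} : (m <= n)%N -> (n <= p)%N -> (m <= p)%N.
Proof. exact: leq_trans. Qed.

Section AA.
Variable R : realType.

Definition epsN (u : nat -> R) (l : R) :=
  forall e, 0 < e -> exists N, forall n, (N <= n)%N -> `|l - u n| < e.

Lemma epsN_cauchy u l : epsN u l -> forall e, 0 < e -> exists N, forall n n',
  (N <= n)%N -> (N <= n')%N -> `|u n - u n'| < e.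
Proof.
move=> H e e0. have e20 : 0 < e / 2 by rewrite divr_gt0.
have [N HN] := H _ e20. exists N => n n' hn hn'.
have h1 := HN n hn. have h2 := HN n' hn'.
rewrite distrC in h1.
have := ler_distD l (u n) (u n'). lra.
Qed.

Lemma AA (f : nat -> R -> R) :
 (forall c d : R, 0 < c -> c <= d -> exists B M : R, 0 <= M /\
   forall n x y, c <= x -> x <= d -> c <= y -> y <= d ->
     `|f n x| <= B /\ `|f n x - f n y| <= M * `|x - y|) ->
 exists (sigma : nat -> nat) (Q : R -> R),
   (forall n, (sigma n < sigma n.+1)%N) /\
   (forall x, 0 < x -> {for x, continuous Q}) /\
   (forall c d, 0 < c -> c <= d -> forall e, 0 < e ->
      exists N : nat, forall n, (N <= n)%N -> forall X, c <= X -> X <= d ->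
        `|f (sigma n) X - Q X| < e).
Proof.
move=> H.
have Hext : forall t : (nat -> nat) * nat, exists psi, sinc psi /\
    exists l, epsN (fun n => f (t.1 (psi n)) (grid R t.2)) l.
  move=> [phi k] /=. have gk := grid_gt0 R k.
  have [B [M [_ HB]]] := H _ _ gk (lexx _).
  have [psi [ipsi hl]] := @bw R (fun n => f (phi n) (grid R k)) B
    (fun n => (HB (phi n) _ _ (lexx _) (lexx _) (lexx _) (lexx _)).1).
  by exists psi.
have [E HE] := choice Hext.
have HEs : forall t, sinc (E t) by move=> t; case: (HE t).
pose sigma n := diag E n n.
have gridlim : forall k, exists l, epsN (fun n => f (sigma n) (grid R k)) l.
  move=> k.
  have [l Hl] : exists l, epsN (fun n => f (diag E k n) (grid R k)) l.
    case: k => [|k].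
      by case: (HE (id, 0%N)) => _ [l Hl]; exists l; exact: Hl.
    by case: (HE (diag E k, k.+1)) => _ [l Hl]; exists l; exact: Hl.
  exists l => e e0. have [N HN] := Hl e e0. exists (maxn N k) => n hn.
  have hkn : (k <= n)%N by exact: leqT (leq_maxr _ _) hn.
  have [m [hm hd]] := @diag_tail E HEs k (n - k) n.
  rewrite subnKC // in hd. rewrite /sigma hd. apply: HN.
  apply: (leqT _ hm); exact: leqT (leq_maxl _ _) hn.
have gridc : forall k e, 0 < e -> exists N, forall n n', (N <= n)%N -> (N <= n')%N ->
    `|f (sigma n) (grid R k) - f (sigma n') (grid R k)| < e.
  move=> k; have [l Hl] := gridlim k; exact: epsN_cauchy Hl.
have unifc : forall c d, 0 < c -> c <= d -> forall e, 0 < e -> exists N, forall n n',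
    (N <= n)%N -> (N <= n')%N -> forall x, c <= x -> x <= d ->
    `|f (sigma n) x - f (sigma n') x| < e.
  move=> c d c0 cd e e0.
  have c20 : 0 < c / 2 by rewrite divr_gt0.
  have hc2 : c / 2 <= d by lra.
  have [B [M [M0 HBM]]] := H (c / 2) d c20 hc2.
  have e30 : 0 < e / 3 by rewrite divr_gt0.
  have M10 : 0 < M + 1 by lra.
  have ee0 : 0 < e / (6 * (M + 1)) by rewrite divr_gt0 // mulr_gt0.
  set eta := Num.min (c / 2) (e / (6 * (M + 1))).
  have eta0 : 0 < eta by rewrite lt_min c20 ee0.
  have eta1 : eta <= c / 2 by rewrite ge_min lexx.
  have eta2 : eta <= e / (6 * (M + 1)) by rewrite ge_min lexx orbT.
  have [m [I HI]] := @grid_approx R c d eta c0 eta0.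
  have [N HN] := @fin_common (fun i n n' => `|f (sigma n) (grid R (pickle (i, m)))
      - f (sigma n') (grid R (pickle (i, m)))| < e / 3) I
      (fun i _ => gridc (pickle (i, m)) (e / 3) e30).
  exists N => n n' hn hn' x cx xd.
  have [i [iI [g1 [g2 g3]]]] := HI x cx xd.
  have HNi := HN i iI n n' hn hn'.
  move: g1 g2 g3 HNi; set g := grid R (pickle (i, m)) => g1 g2 g3 HNi.
  have cg : c / 2 <= g by lra.
  have cx2 : c / 2 <= x by lra.
  have L1 := (HBM (sigma n) x g cx2 xd cg g2).2.
  have L2 := (HBM (sigma n') g x cg g2 cx2 xd).2.
  rewrite (distrC g x) in L2.
  have Mg : M * `|x - g| <= e / 6.
    have h1 : (M + 1) * `|x - g| <= (M + 1) * (e / (6 * (M + 1))).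
      by rewrite ler_wpM2l ?ltW // (lt_le_trans g3 eta2).
    have h2 : (M + 1) * (e / (6 * (M + 1))) = e / 6.
      by field; rewrite gt_eqF.
    have h3 := normr_ge0 (x - g).
    lra.
  have := @tri3 R (f (sigma n) x) (f (sigma n) g) (f (sigma n') g) (f (sigma n') x).
  lra.
have Hlim : forall x, exists l, 0 < x -> epsN (fun n => f (sigma n) x) l.
  move=> x; case: (ltP 0 x) => x0; last by exists 0.
  have [|l Hl] := @cauchy_lim R (fun n => f (sigma n) x).
    move=> e e0; have [N HN] := unifc x x x0 (lexx x) e e0.
    exists N => n n' hn hn'; exact: HN n n' hn hn' x (lexx x) (lexx x).
  by exists l => _; exact: Hl.
have [Q HQ] := choice Hlim.
exists sigma, Q; split; [|split].
- exact: diag_diag_sinc.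
- move=> x x0; apply/cvgrPdist_lt => e e0.
  have x20 : 0 < x / 2 by rewrite divr_gt0.
  have [B [M [M0 HBM]]] := H (x / 2) (2 * x) x20 ltac:(lra).
  have e30 : 0 < e / 3 by rewrite divr_gt0.
  have M10 : 0 < M + 1 by lra.
  have ee0 : 0 < e / (3 * (M + 1)) by rewrite divr_gt0 // mulr_gt0.
  set dl := Num.min (x / 2) (e / (3 * (M + 1))).
  have dl0 : 0 < dl by rewrite lt_min x20 ee0.
  have dl1 : dl <= x / 2 by rewrite ge_min lexx.
  have dl2 : dl <= e / (3 * (M + 1)) by rewrite ge_min lexx orbT.
  apply/nbhs_ballP; exists dl => // y; rewrite /ball_ /= => hy.
  have := hy; rewrite ltr_distlC => /andP[hy1 hy2].
  have y0 : 0 < y by lra.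
  have [N1 HN1] := HQ x x0 (e / 3) e30.
  have [N2 HN2] := HQ y y0 (e / 3) e30.
  set n := maxn N1 N2.
  have h1 := HN1 n (leq_maxl _ _).
  have h2 := HN2 n (leq_maxr _ _).
  rewrite distrC in h2.
  have h3 := (HBM (sigma n) x y ltac:(lra) ltac:(lra) ltac:(lra) ltac:(lra)).2.
  have Mg : M * `|x - y| <= e / 3.
    have h4 : (M + 1) * `|x - y| <= (M + 1) * (e / (3 * (M + 1))).
      by rewrite ler_wpM2l ?ltW // (lt_le_trans hy dl2).
    have h5 : (M + 1) * (e / (3 * (M + 1))) = e / 3.
      by field; rewrite gt_eqF.
    have h6 := normr_ge0 (x - y).
    lra.
  have := @tri3 R (Q x) (f (sigma n) x) (f (sigma n) y) (Q y).
  lra.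
- move=> c d c0 cd e e0.
  have e20 : 0 < e / 2 by rewrite divr_gt0.
  have [N HN] := unifc c d c0 cd (e / 2) e20.
  exists N => n hn X cX Xd.
  have X0 : 0 < X by lra.
  have [N' HN'] := HQ X X0 (e / 2) e20.
  have h1 := HN n (maxn N N') hn (leq_maxl _ _) X cX Xd.
  have h2 := HN' (maxn N N') (leq_maxr _ _).
  rewrite distrC in h2.
  have := ler_distD (f (sigma (maxn N N')) X) (f (sigma n) X) (Q X).
  lra.
Qed.
End AA.


Section B1.
Variable R : realType.

Lemma pow_bound (p u q s : R) : 0 < p -> p <= u -> u <= q ->
  u `^ s <= p `^ s + q `^ s.
Proof.
move=> p0 pu uq. have u0 : 0 < u by exact: lt_le_trans pu.
have q0 : 0 < q by exact: lt_le_trans uq.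
case: (leP 0 s) => s0.
- have h1 : u `^ s <= q `^ s.
    by apply: (ge0_ler_powR s0) => //; rewrite nnegrE ltW.
  have := powR_ge0 p s. lra.
- have hu : u `^ s = (u `^ (- s))^-1 by rewrite -powRN opprK.
  have hp : p `^ s = (p `^ (- s))^-1 by rewrite -powRN opprK.
  have h1 : p `^ (- s) <= u `^ (- s).
    by apply: (ge0_ler_powR _) => //; rewrite ?nnegrE ?ltW // oppr_gt0.
  have h2 : (u `^ (- s))^-1 <= (p `^ (- s))^-1.
    by rewrite lef_pV2 ?posrE ?powR_gt0.
  have := powR_ge0 q s. rewrite hu hp. lra.
Qed.

Lemma K_lip (a b : R) (K : R -> R -> R) C3 c D w s1 s2 : C1_quadrant K ->
  (forall x y, c <= x -> x <= D -> 0 < y -> `|dxK K x y| <= C3 * (y `^ (- a) + y `^ b)) ->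
  0 < c -> c <= s1 -> s1 <= D -> c <= s2 -> s2 <= D -> 0 < w ->
  `|K s1 w - K s2 w| <= C3 * (w `^ (- a) + w `^ b) * `|s1 - s2|.
Proof.
move=> hK hd c0.
wlog : s1 s2 / s1 <= s2.
  move=> W; case: (leP s1 s2) => h; first exact: (W s1 s2 h).
  move=> h1 h2 h3 h4 hw. rewrite distrC (distrC s1).
  exact: (W s2 s1 (ltW h) h3 h4 h1 h2 hw).
move=> s12 cs1 s1D cs2 s2D w0.
have hder : forall x, x \in `]s1, s2[ -> is_derive x 1 (fun t => K t w) (dxK K x w).
  move=> x; rewrite in_itv /= => /andP[h1 h2].
  have x0 : 0 < x by lra.
  rewrite /dxK derive1E. case: (hK x w x0 w0) => hd1 _ _ _ _. exact: (derivableP hd1).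
have hcont : {within `[s1, s2], continuous (fun t => K t w)}.
  apply: derivable_within_continuous => x; rewrite in_itv /= => /andP[h1 h2].
  have x0 : 0 < x by lra.
  case: (hK x w x0 w0) => hd1 _ _ _ _.  exact: hd1.
have [xi hxi hmvt] := @MVT_segment R (fun t => K t w) (fun t => dxK K t w) s1 s2 s12 hder hcont.
move: hxi; rewrite in_itv /= => /andP[h1 h2].
rewrite (distrC (K s1 w)) /= hmvt normrM (distrC s1) (ger0_norm (x := s2 - s1)) ?subr_ge0 //.
apply: ler_wpM2r; first by rewrite subr_ge0.
apply: hd => //; [exact: le_trans cs1 h1 | exact: le_trans h2 s2D].
Qed.

Lemma K_scale (a b : R) (K : R -> R -> R) L u v :
  (forall x y, 0 < x -> 0 < y -> K x y = K y x) ->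
  (forall l x y, 0 < l -> 0 < x -> 0 < y -> K (l * x) (l * y) = l `^ (b - a) * K x y) ->
  0 < L -> 0 < u -> 0 < v -> K u v = L `^ (b - a) * K (v / L) (u / L).
Proof.
move=> Ks Kh L0 u0 v0.
rewrite -Kh ?divr_gt0 // Ks //. congr K; field; exact: lt0r_neq0.
Qed.


Lemma powRV (L s : R) : 0 < L -> (L^-1) `^ s = (L `^ s)^-1.
Proof.
move=> L0. rewrite -powR_inv1; last exact: ltW. by rewrite -powRrM mulN1r powRN.
Qed.

Lemma powR_div (u L s : R) : 0 <= u -> 0 < L -> (u / L) `^ s = u `^ s / L `^ s.
Proof. move=> u0 L0. rewrite powRM //; last by rewrite invr_ge0 ltW. by rewrite powRV. Qed.

Lemma powP1 (b L m : R) : b < 1 -> 0 < L -> 0 <= m -> m `^ (1 / (1 - b)) <= L ->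
  L `^ b / L * m <= 1.
Proof.
move=> b1 L0 m0 hm.
have hb : 0 < 1 - b by lra.
have e1 : m = (m `^ (1 / (1 - b))) `^ (1 - b).
  by rewrite -powRrM mul1r mulVf ?gt_eqF // powRr1.
have e2 : m <= L `^ (1 - b).
  rewrite {1}e1. apply: (ge0_ler_powR (ltW hb)) => //; rewrite nnegrE ?powR_ge0 ?ltW //.
have e3 : L `^ b * L `^ (1 - b) = L.
  rewrite -powRD; last by apply/implyP => _; exact: lt0r_neq0.
  have -> : b + (1 - b) = 1 by ring.
  by rewrite powRr1 // ltW.
have Lb0 : 0 <= L `^ b / L by rewrite divr_ge0 ?powR_ge0 ?ltW.
apply: (le_trans (ler_wpM2l Lb0 e2)).
by rewrite mulrAC e3 mulfV ?gt_eqF.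
Qed.

Lemma powP2 (a L m : R) : 0 < a -> 0 < L -> 0 <= m -> m `^ (1 / (1 + a)) <= L ->
  L `^ (- a) / L * m <= 1.
Proof.
move=> a0 L0 m0 hm. have := @powP1 (- a) L m. rewrite opprK. apply => //. lra.
Qed.

End B1.


Section B2.
Variable R : realType.
Local Notation mu := (@lebesgue_measure R).
Local Notation D := (oitv (0:R) 1).

Lemma oitv01 : D = `]0, 1[%classic.
Proof. by apply/seteqP; split => x /=; rewrite in_itv /=. Qed.

Lemma measD : (R.-ocitv.-measurable).-sigma.-measurable D.
Proof. rewrite oitv01; exact: measurable_itv. Qed.

Lemma openD : open D.
Proof. rewrite oitv01; exact: interval_open. Qed.

Lemma cont_meas (F : R -> R) : (forall y, 0 < y -> y < 1 -> {for y, continuous F}) ->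
  measurable_fun D F.
Proof.
move=> hF; apply: open_continuous_measurable_fun; first exact: openD.
move=> y; rewrite inE /= => /andP[y0 y1]; exact: hF.
Qed.

Variable h : R -> R.
Hypothesis hpos : forall x, 0 < x -> 0 <= h x.
Hypothesis hcont : forall x, 0 < x -> {for x, continuous h}.
Hypothesis hint1 : (\int[mu]_(x in D) (h x)%:E <= 1)%E.

Lemma hmeas : measurable_fun D h.
Proof. by apply: cont_meas => y y0 _; exact: hcont. Qed.

Lemma hint : mu.-integrable D (EFin \o h).
Proof.
apply/integrableP; split; first by apply/measurable_EFinP; exact: hmeas.
apply: (le_lt_trans _ (le_lt_trans hint1 (ltry 1))).
rewrite le_eqVlt; apply/orP; left; apply/eqP.
apply: eq_integral => y; rewrite inE /= => /andP[y0 _].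
by rewrite ger0_norm // hpos.
Qed.

Lemma intdom (F : R -> R) C : measurable_fun D F ->
  (forall y, D y -> `|F y| <= C * h y) -> mu.-integrable D (EFin \o F).
Proof.
move=> mF hF.
apply: (@le_integrable _ _ _ mu D measD _ (fun y => (C * h y)%:E)).
- by apply/measurable_EFinP.
- move=> y Dy /=; rewrite lee_fin; apply: (le_trans (hF y Dy)); exact: ler_norm.
- apply: (eq_integrable measD _ _ _ (integrableZl measD C hint)).
  by move=> y _.
Qed.


Variable eps : R.
Hypothesis eps0 : 0 < eps.

Lemma pow_meas s : measurable_fun D (fun y => (y + eps) `^ s).
Proof.
have m1 : measurable_fun setT (fun x : R => x `^ s) := @measurable_powR R s.
have m2 : measurable_fun D (fun y : R => y + eps).
  by apply: measurable_funD => //; exact: measurable_id.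
exact: (measurableT_comp m1 m2).
Qed.

Lemma Fs_int s : mu.-integrable D (EFin \o (fun y => h y * (y + eps) `^ s)).
Proof.
apply: (intdom _ (eps `^ s + (1 + eps) `^ s)).
  by apply: measurable_funM; [exact: hmeas | exact: pow_meas].
move=> y /= /andP[y0 y1].
have hy := hpos _ y0.
rewrite ger0_norm ?mulr_ge0 ?powR_ge0 // mulrC.
apply: ler_wpM2r => //. apply: pow_bound => //; lra.
Qed.

Lemma Kmeas (K : R -> R -> R) v : C1_quadrant K -> 0 < v ->
  measurable_fun D (fun y => K (y + eps) v).
Proof.
move=> hK v0; apply: cont_meas => y y0 _.
have ye : 0 < y + eps by rewrite addr_gt0.
case: (hK (y + eps) v ye v0) => _ _ hc _ _.
apply: (continuous_comp (f := fun y => (y + eps, v)) (g := fun p : R * R => K p.1 p.2)).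
  have h1 : (fun z => z + eps) @ y --> y + eps.
    by apply: cvgD; [exact: cvg_id | exact: cvg_cst].
  have h2 : (fun _ : R => v) @ y --> v by exact: cvg_cst.
  exact: (cvg_pair h1 h2).
exact: hc.
Qed.


Lemma intZ (F : R -> R) al : mu.-integrable D (EFin \o F) ->
  mu.-integrable D (EFin \o (fun y => al * F y)).
Proof.
move=> HF; apply: (eq_integrable measD _ _ _ (integrableZl measD al HF)).
by move=> y _.
Qed.

Lemma intD (F G : R -> R) : mu.-integrable D (EFin \o F) -> mu.-integrable D (EFin \o G) ->
  mu.-integrable D (EFin \o (fun y => F y + G y)).
Proof.
move=> HF HG; apply: (eq_integrable measD _ _ _ (integrableD measD HF HG)).
by move=> y _.
Qed.

Lemma intB (F G : R -> R) : mu.-integrable D (EFin \o F) -> mu.-integrable D (EFin \o G) ->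
  mu.-integrable D (EFin \o (fun y => F y - G y)).
Proof.
move=> HF HG; apply: (eq_integrable measD _ _ _ (integrableB measD HF HG)).
by move=> y _.
Qed.

Variables (a b C2 : R) (K : R -> R -> R).
Hypothesis hK : C1_quadrant K.
Hypothesis Kpos : forall x y, 0 < x -> 0 < y -> 0 <= K x y.
Hypothesis C20 : 0 < C2.
Hypothesis Kub : forall x y, 0 < x -> 0 < y ->
  K x y <= C2 * (x `^ (- a) * y `^ b + x `^ b * y `^ (- a)).

Definition F1 y := h y * (y + eps) `^ (- a).
Definition F2 y := h y * (y + eps) `^ b.
Definition gF (L X : R) (y : R) := h y / L * Keps K eps y (L * X).

Lemma comb_int al be : mu.-integrable D (EFin \o (fun y => al * F1 y + be * F2 y)).
Proof. by apply: intD; apply: intZ; apply: Fs_int. Qed.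

Lemma Rint_comb al be : Rintegral mu D (fun y => al * F1 y + be * F2 y) =
  al * Rintegral mu D F1 + be * Rintegral mu D F2.
Proof.
rewrite RintegralD; [|exact: measD|apply: intZ; exact: Fs_int|apply: intZ; exact: Fs_int].
by rewrite !RintegralZl //; [exact: measD|exact: Fs_int|exact: measD|exact: Fs_int].
Qed.

Lemma gF_meas L X : 0 < L -> 0 < X -> measurable_fun D (gF L X).
Proof.
move=> L0 X0; rewrite /gF /Keps.
apply: measurable_funM.
  apply: measurable_funM; [exact: hmeas | exact: measurable_cst].
apply: Kmeas => //. by rewrite addr_gt0 // mulr_gt0.
Qed.

Lemma gF_pt L X y : 0 < L -> 0 < X -> D y ->
  0 <= gF L X y /\ gF L X y <= C2 / L * ((L * X + eps) `^ b) * F1 y +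
                                C2 / L * ((L * X + eps) `^ (- a)) * F2 y.
Proof.
move=> L0 X0 /= /andP[y0 y1].
have u0 : 0 < y + eps by rewrite addr_gt0.
have v0 : 0 < L * X + eps by rewrite addr_gt0 // mulr_gt0.
have hy := hpos _ y0.
have hL : 0 <= h y / L by rewrite divr_ge0 // ltW.
rewrite /gF /Keps /F1 /F2; split; first by apply: mulr_ge0 => //; apply: Kpos.
have k2 := ler_wpM2l hL (Kub _ _ u0 v0).
apply: (le_trans k2).
rewrite le_eqVlt; apply/orP; left; apply/eqP; ring.
Qed.

Lemma gF_int L X : 0 < L -> 0 < X -> mu.-integrable D (EFin \o gF L X).
Proof.
move=> L0 X0.
set v := L * X + eps.
have v0 : 0 < v by rewrite addr_gt0 // mulr_gt0.
set P1 := eps `^ (- a) + (1 + eps) `^ (- a).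
set P2 := eps `^ b + (1 + eps) `^ b.
apply: (intdom _ (C2 / L * v `^ b * P1 + C2 / L * v `^ (- a) * P2)).
  exact: gF_meas.
move=> y Dy; have [g0 g1] := gF_pt _ _ _ L0 X0 Dy.
move: Dy => /= /andP[y0 y1]. have hy := hpos _ y0.
rewrite ger0_norm //. apply: (le_trans g1).
rewrite /F1 /F2 -/v.
have e1 : (y + eps) `^ (- a) <= P1 by apply: pow_bound => //; lra.
have e2 : (y + eps) `^ b <= P2 by apply: pow_bound => //; lra.
have c1 : 0 <= C2 / L * v `^ b by rewrite mulr_ge0 ?divr_ge0 ?powR_ge0 // ltW.
have c2 : 0 <= C2 / L * v `^ (- a) by rewrite mulr_ge0 ?divr_ge0 ?powR_ge0 // ltW.
have t1 : C2 / L * v `^ b * (h y * (y + eps) `^ (- a)) <= C2 / L * v `^ b * (h y * P1).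
  exact: (ler_wpM2l c1 (ler_wpM2l hy e1)).
have t2 : C2 / L * v `^ (- a) * (h y * (y + eps) `^ b) <= C2 / L * v `^ (- a) * (h y * P2).
  exact: (ler_wpM2l c2 (ler_wpM2l hy e2)).
have -> : (C2 / L * v `^ b * P1 + C2 / L * v `^ (- a) * P2) * h y =
  C2 / L * v `^ b * (h y * P1) + C2 / L * v `^ (- a) * (h y * P2) by ring.
exact: lerD t1 t2.
Qed.

Lemma Q_bound L X : 0 < L -> 0 < X ->
  0 <= Rintegral mu D (gF L X) /\
  Rintegral mu D (gF L X) <= C2 / L * ((L * X + eps) `^ b) * Rintegral mu D F1 +
                             C2 / L * ((L * X + eps) `^ (- a)) * Rintegral mu D F2.
Proof.
move=> L0 X0; split.
  by apply: Rintegral_ge0 => y Dy; case: (gF_pt _ _ _ L0 X0 Dy).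
rewrite -Rint_comb. apply: le_Rintegral.
- exact: measD.
- exact: gF_int.
- exact: comb_int.
- by move=> y Dy; case: (gF_pt _ _ _ L0 X0 Dy).
Qed.


Hypothesis Ks : forall x y, 0 < x -> 0 < y -> K x y = K y x.
Hypothesis Kh : forall l x y, 0 < l -> 0 < x -> 0 < y ->
  K (l * x) (l * y) = l `^ (b - a) * K x y.

Lemma gF_lip_pt L X1 X2 c d C3 y : 0 < L -> 0 < c -> c <= X1 -> X1 <= d ->
  c <= X2 -> X2 <= d -> eps / L <= 1 ->
  (forall x y, c <= x -> x <= d + 1 -> 0 < y -> `|dxK K x y| <= C3 * (y `^ (- a) + y `^ b)) ->
  D y ->
  gF L X1 y - gF L X2 y <=
    C3 * `|X1 - X2| * (L `^ (b - a) / L / L `^ (- a)) * F1 y +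
    C3 * `|X1 - X2| * (L `^ (b - a) / L / L `^ b) * F2 y.
Proof.
move=> L0 c0 cX1 X1d cX2 X2d eL hd /= /andP[y0 y1].
have u0 : 0 < y + eps by rewrite addr_gt0.
have X10 : 0 < X1 by exact: lt_le_trans cX1.
have X20 : 0 < X2 by exact: lt_le_trans cX2.
have v10 : 0 < L * X1 + eps by rewrite addr_gt0 // mulr_gt0.
have v20 : 0 < L * X2 + eps by rewrite addr_gt0 // mulr_gt0.
have hy := hpos _ y0.
rewrite /gF /Keps /F1 /F2.
rewrite (@K_scale R a b K L _ _ Ks Kh L0 u0 v10) (@K_scale R a b K L _ _ Ks Kh L0 u0 v20).
have e1 : (L * X1 + eps) / L = X1 + eps / L by field; exact: lt0r_neq0.
have e2 : (L * X2 + eps) / L = X2 + eps / L by field; exact: lt0r_neq0.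
rewrite e1 e2.
set w := (y + eps) / L.
have w0 : 0 < w by rewrite divr_gt0.
have eL0 : 0 <= eps / L by rewrite divr_ge0 // ltW.
have kl := @K_lip R a b K C3 c (d + 1) w (X1 + eps / L) (X2 + eps / L) hK hd c0
  ltac:(lra) ltac:(lra) ltac:(lra) ltac:(lra) w0.
have es : X1 + eps / L - (X2 + eps / L) = X1 - X2 by ring.
rewrite es in kl.
have hw1 : w `^ (- a) = (y + eps) `^ (- a) / L `^ (- a) by rewrite powR_div // ltW.
have hw2 : w `^ b = (y + eps) `^ b / L `^ b by rewrite powR_div // ltW.
rewrite hw1 hw2 in kl.
set k1 := K (X1 + eps / L) w in kl *. set k2 := K (X2 + eps / L) w in kl *.
have g0 : 0 <= h y / L * L `^ (b - a) by rewrite mulr_ge0 ?divr_ge0 ?powR_ge0 // ltW.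
have kk : k1 - k2 <= `|k1 - k2| := ler_norm _.
have := ler_wpM2l g0 (le_trans kk kl).
move=> H; apply: (le_trans _ (le_trans H _)).
  rewrite le_eqVlt; apply/orP; left; apply/eqP; ring.
rewrite le_eqVlt; apply/orP; left; apply/eqP; ring.
Qed.

Lemma Q_lip L X1 X2 c d C3 : 0 < L -> 0 < c -> c <= X1 -> X1 <= d ->
  c <= X2 -> X2 <= d -> eps / L <= 1 ->
  (forall x y, c <= x -> x <= d + 1 -> 0 < y -> `|dxK K x y| <= C3 * (y `^ (- a) + y `^ b)) ->
  Rintegral mu D (gF L X1) - Rintegral mu D (gF L X2) <=
    C3 * `|X1 - X2| * (L `^ (b - a) / L / L `^ (- a)) * Rintegral mu D F1 +
    C3 * `|X1 - X2| * (L `^ (b - a) / L / L `^ b) * Rintegral mu D F2.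
Proof.
move=> L0 c0 cX1 X1d cX2 X2d eL hd.
have X10 : 0 < X1 by exact: lt_le_trans cX1.
have X20 : 0 < X2 by exact: lt_le_trans cX2.
rewrite -Rint_comb -RintegralB; [|exact: measD|exact: gF_int|exact: gF_int].
apply: le_Rintegral.
- exact: measD.
- apply: intB; exact: gF_int.
- exact: comb_int.
- move=> y Dy; exact: (gF_lip_pt L X1 X2 c d C3 y L0 c0 cX1 X1d cX2 X2d eL hd Dy).
Qed.

End B2.


Section C1.
Variable R : realType.

Lemma est (a b C2 C3 c d eps : R) (K : R -> R -> R) (hh : R -> R) :
  0 < a -> b < 1 -> C1_quadrant K ->
  (forall x y, 0 < x -> 0 < y -> 0 <= K x y) ->
  (forall x y, 0 < x -> 0 < y -> K x y = K y x) ->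
  (forall l x y, 0 < l -> 0 < x -> 0 < y ->
     K (l * x) (l * y) = l `^ (b - a) * K x y) ->
  0 < C2 ->
  (forall x y, 0 < x -> 0 < y ->
     K x y <= C2 * (x `^ (- a) * y `^ b + x `^ b * y `^ (- a))) ->
  0 < c -> c <= d ->
  (forall x y, c <= x -> x <= d + 1 -> 0 < y -> `|dxK K x y| <= C3 * (y `^ (- a) + y `^ b)) ->
  0 <= C3 ->
  (forall x, 0 < x -> 0 <= hh x) ->
  (forall x, 0 < x -> {for x, continuous hh}) ->
  (\int[lebesgue_measure]_(x in oitv 0 1) (hh x)%:E <= 1)%E ->
  0 < eps -> eps <= 1 -> 1 <= L_eps hh a b eps ->
  forall x y, c <= x -> x <= d -> c <= y -> y <= d ->
   `|Q_eps K hh a b eps x| <= C2 * ((c `^ b + (d + 1) `^ b) + (c `^ (- a) + (d + 1) `^ (- a))) /\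
   `|Q_eps K hh a b eps x - Q_eps K hh a b eps y| <= 2 * C3 * `|x - y|.
Proof.
move=> a0 b1 hK Kpos Ks Kh C20 Kub c0 cd hd C30 hpos hcont hint1 e0 e1 L1 x y cx xd cy yd.
set L := L_eps hh a b eps in L1 *.
have eF1 : Rintegral lebesgue_measure (oitv 0 1) (@F1 R hh eps a) = mu_eps hh a eps by [].
have eF2 : Rintegral lebesgue_measure (oitv 0 1) (@F2 R hh eps b) = lambda_eps hh b eps by [].
set mu := mu_eps hh a eps in eF1 *.
set la := lambda_eps hh b eps in eF2 *.
have mu0 : 0 <= mu.
  rewrite -eF1; apply: Rintegral_ge0 => z /= /andP[z0 _]; rewrite /F1 mulr_ge0 ?powR_ge0 //; exact: hpos.
have la0 : 0 <= la.
  rewrite -eF2; apply: Rintegral_ge0 => z /= /andP[z0 _]; rewrite /F2 mulr_ge0 ?powR_ge0 //; exact: hpos.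
have muL : mu `^ (1 / (1 - b)) <= L by rewrite /L /L_eps -/mu le_max; apply/orP; right; exact: lexx.
have laL : la `^ (1 / (1 + a)) <= L by rewrite /L /L_eps -/la le_max; apply/orP; left; exact: lexx.
have eQ : forall X, Q_eps K hh a b eps X = Rintegral lebesgue_measure (oitv 0 1) (@gF R hh eps K L X) by [].
rewrite !eQ. clearbody L mu la.
have L0 : 0 < L by lra.
have Pmu := @powP1 R b L mu b1 L0 mu0 muL.
have Pla := @powP2 R a L la a0 L0 la0 laL.
have eL : eps / L <= 1.
  rewrite ler_pdivrMr // mul1r. lra.
have eL0 : 0 <= eps / L by rewrite divr_ge0 // ltW.
have x0 : 0 < x by exact: lt_le_trans cx.
have y0 : 0 < y by exact: lt_le_trans cy.
split.
- have [q0 q1] := @Q_bound R hh hpos hcont hint1 eps e0 a b C2 K hK Kpos C20 Kub L x L0 x0.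
  rewrite ger0_norm; last exact: q0.
  rewrite eF1 eF2 in q1. apply: (le_trans q1).
  set s := x + eps / L.
  have hv : L * x + eps = L * s by rewrite /s; field; exact: lt0r_neq0.
  have s0 : 0 < s by rewrite /s; lra.
  rewrite hv (powRM b (ltW L0) (ltW s0)) (powRM (- a) (ltW L0) (ltW s0)).
  have sb : s `^ b <= c `^ b + (d + 1) `^ b by apply: pow_bound => //; rewrite /s; lra.
  have sa : s `^ (- a) <= c `^ (- a) + (d + 1) `^ (- a) by apply: pow_bound => //; rewrite /s; lra.
  have t1 : C2 / L * (L `^ b * s `^ b) * mu = C2 * s `^ b * (L `^ b / L * mu) by field; exact: lt0r_neq0.
  have t2 : C2 / L * (L `^ (- a) * s `^ (- a)) * la = C2 * s `^ (- a) * (L `^ (- a) / L * la)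
    by field; exact: lt0r_neq0.
  rewrite t1 t2.
  have k1 : 0 <= C2 * s `^ b by rewrite mulr_ge0 ?powR_ge0 // ltW.
  have k2 : 0 <= C2 * s `^ (- a) by rewrite mulr_ge0 ?powR_ge0 // ltW.
  have u1 := ler_wpM2l k1 Pmu. have u2 := ler_wpM2l k2 Pla.
  rewrite !mulr1 in u1 u2.
  have u3 := ler_wpM2l (ltW C20) sb. have u4 := ler_wpM2l (ltW C20) sa.
  have -> : C2 * (c `^ b + (d + 1) `^ b + (c `^ (- a) + (d + 1) `^ (- a))) =
    C2 * (c `^ b + (d + 1) `^ b) + C2 * (c `^ (- a) + (d + 1) `^ (- a)) by ring.
  exact: lerD (le_trans u1 u3) (le_trans u2 u4).
- have iden1 : L `^ (b - a) / L / L `^ (- a) = L `^ b / L.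
    rewrite powRD; last by apply/implyP => _; exact: lt0r_neq0.
    field. rewrite lt0r_neq0 // lt0r_neq0 // powR_gt0 //.
  have iden2 : L `^ (b - a) / L / L `^ b = L `^ (- a) / L.
    rewrite powRD; last by apply/implyP => _; exact: lt0r_neq0.
    field. rewrite lt0r_neq0 // lt0r_neq0 // powR_gt0 //.
  have hd' : forall x y, c <= x -> x <= d + 1 -> 0 < y ->
      `|dxK K x y| <= C3 * (y `^ (- a) + y `^ b) := hd.
  have l1 := @Q_lip R hh hpos hcont hint1 eps e0 a b C2 K hK Kpos C20 Kub Ks Kh L x y c d C3 L0 c0 cx xd cy yd eL hd'.
  have l2 := @Q_lip R hh hpos hcont hint1 eps e0 a b C2 K hK Kpos C20 Kub Ks Kh L y x c d C3 L0 c0 cy yd cx xd eL hd'.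
  rewrite eF1 eF2 iden1 iden2 in l1 l2. rewrite (distrC y x) in l2.
  have nx := normr_ge0 (x - y).
  have w0 : 0 <= C3 * `|x - y| by rewrite mulr_ge0.
  have v1 := ler_wpM2l w0 Pmu. have v2 := ler_wpM2l w0 Pla.
  rewrite !mulrA in v1 v2.
  rewrite ler_norml; apply/andP; split; lra.
Qed.

End C1.


Theorem lemma3p8 (R : realType) (a b rho C1 C2 : R) (K : R -> R -> R)
  (eps : nat -> R) (h : nat -> R -> R) :
  0 < a -> b < 1 ->
  (* assumptions on the kernel K *)
  C1_quadrant K ->
  (forall x y, 0 < x -> 0 < y -> 0 <= K x y) ->
  (forall x y, 0 < x -> 0 < y -> K x y = K y x) ->
  (forall l x y, 0 < l -> 0 < x -> 0 < y ->
     K (l * x) (l * y) = l `^ (b - a) * K x y) ->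
  0 < C1 -> 0 < C2 ->
  (forall x y, 0 < x -> 0 < y ->
     C1 * (x `^ (- a) * y `^ b + x `^ b * y `^ (- a)) <= K x y /\
     K x y <= C2 * (x `^ (- a) * y `^ b + x `^ b * y `^ (- a))) ->
  (forall d D, 0 < d -> d <= D -> exists C3 : R,
     forall x y, d <= x -> x <= D -> 0 < y ->
       `|dxK K x y| <= C3 * (y `^ (- a) + y `^ b)) ->
  (* rho *)
  Num.max b 0 < rho -> rho < 1 ->
  (* the sequence eps -> 0 *)
  (forall n, 0 < eps n) ->
  eps n @[n --> \oo] --> 0 ->
  (* the functions h_eps *)
  (forall n x, 0 < x -> 0 <= h n x) ->
  (forall n x, 0 < x -> {for x, continuous (h n)}) ->
  (forall n r, 0 < r ->
     (\int[lebesgue_measure]_(x in (oitv 0 r)) (h n x)%:E <= (r `^ (1 - rho))%:E)%E) ->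
  (forall n, r `^ (rho - 1) * Rintegral lebesgue_measure (oitv 0 r) (h n)
               @[r --> +oo] --> (1 : R)) ->
  (forall n (phi : R -> R), test_fun phi ->
     lebesgue_measure.-integrable (oray 0)
       (fun x => (derive1 phi x)%:E * Ieps K (eps n) (h n) x)%E /\
     (\int[lebesgue_measure]_(x in (oray 0))
        ((derive1 phi x)%:E * Ieps K (eps n) (h n) x)
      = (Rintegral lebesgue_measure (oray 0) (fun x => derive1 phi x * (x * h n x))
         + (1 - rho) * Rintegral lebesgue_measure (oray 0) (fun x => phi x * h n x))%:E)%E) ->
  (* L_eps -> oo *)
  L_eps (h n) a b (eps n) @[n --> \oo] --> +oo ->
  exists (sigma : nat -> nat) (Q : R -> R),
    (forall n, (sigma n < sigma n.+1)%N) /\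
    (forall x, 0 < x -> {for x, continuous Q}) /\
    (forall c d, 0 < c -> c <= d -> forall e, 0 < e ->
       exists N : nat, forall n, (N <= n)%N -> forall X, c <= X -> X <= d ->
         `|Q_eps K (h (sigma n)) a b (eps (sigma n)) X - Q X| < e).
Proof.
move=> a0 b1 hK Kpos Ks Kh C10 C20 Kbd hd rho0 rho1 eps0 epsc hpos hcont hint hlim hweak Linf.
have Kub : forall x y, 0 < x -> 0 < y ->
    K x y <= C2 * (x `^ (- a) * y `^ b + x `^ b * y `^ (- a)).
  by move=> x y hx hy; case: (Kbd x y hx hy).
have hint1 : forall n, (\int[lebesgue_measure]_(x in oitv 0 1) (h n x)%:E <= 1)%E.
  by move=> n; have := hint n 1 ltr01; rewrite powR1.
move/cvgrPdist_lt: epsc => /(_ 1 ltr01) [N1 _ HN1].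
move/cvgryPge: Linf => /(_ 1) [N2 _ HN2].
set N0 := maxn N1 N2.
have epsle : forall m, eps (N0 + m) <= 1.
  move=> m; have := HN1 (N0 + m) (leq_trans (leq_maxl N1 N2) (leq_addr m N0)).
  rewrite sub0r normrN ger0_norm; [exact: ltW | exact: ltW].
have Lge : forall m, 1 <= L_eps (h (N0 + m)) a b (eps (N0 + m)).
  move=> m; exact: (HN2 (N0 + m) (leq_trans (leq_maxr N1 N2) (leq_addr m N0))).
pose f m X := Q_eps K (h (N0 + m)) a b (eps (N0 + m)) X.
have HA : forall c d : R, 0 < c -> c <= d -> exists B M : R, 0 <= M /\
   forall n x y, c <= x -> x <= d -> c <= y -> y <= d ->
     `|f n x| <= B /\ `|f n x - f n y| <= M * `|x - y|.
  move=> c d c0 cd.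
  have cd1 : c <= d + 1 by lra.
  have [C3 HC3] := hd c (d + 1) c0 cd1.
  have C30 : 0 <= C3.
    have := HC3 c 1 (lexx c) cd1 ltr01. rewrite powR1 /=.
    have := normr_ge0 (dxK K c 1). lra.
  exists (C2 * ((c `^ b + (d + 1) `^ b) + (c `^ (- a) + (d + 1) `^ (- a)))), (2 * C3).
  split; first by rewrite mulr_ge0.
  move=> m x y cx xd cy yd.
  exact: (@est R a b C2 C3 c d (eps (N0 + m)) K (h (N0 + m)) a0 b1 hK Kpos Ks Kh C20 Kub
    c0 cd HC3 C30 (hpos _) (hcont _) (hint1 _) (eps0 _) (epsle m) (Lge m) x y cx xd cy yd).
have [sig [Q [s1 [s2 s3]]]] := @AA R f HA.
exists (fun n => (N0 + sig n)%N), Q; split; [|split].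
- by move=> n; rewrite ltn_add2l; exact: s1.
- exact: s2.
- exact: s3.
Qed.
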